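(* The pseudovariety $\mathbf{RZ}\mathbin{ⓜ}\mathbf{LNB}$, where $\mathbf{LNB}=\mathbf{Sl}\vee\mathbf{LZ}$, is generated by $L_2^{\mathsf{bar}}$.
   Context: A pseudovariety is a class of finite semigroups closed under finite direct products, subsemigroups and homomorphic images. $\mathbf{Sl}$, $\mathbf{LZ}$, $\mathbf{RZ}$ are the pseudovarieties of semilattices, left zero semigroups ($xy=x$) and right zero semigroups ($xy=y$). The Mal'cev product $\mathbf{V}\mathbin{ⓜ}\mathbf{W}$ is the pseudovariety generated by all finite semigroups $S$ admitting a homomorphism $\varphi\colon S\to T$ with $T\in\mathbf{W}$ and $e\varphi^{-1}\in\mathbf{V}$ for every idempotent $e\in T$. $L_2=\{e,f\}$ is the left zero semigroup of order two and $L_2^{\mathsf{bar}}=\{e,f,\bar e,\bar f,\bar I\}$ is the semigroup with multiplication: $xy=y$ for $y\in\{\bar e,\bar f,\bar I\}$; $ee=ef=e$; $fe=ff=f$; $\bar ee=\bar ef=\bar e$; $\bar fe=\bar ff=\bar f$; $\bar Ie=\bar e$; $\bar If=\bar f$. *)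

(* Defs.v *)
From mathcomp Require Import all_boot.
Set Implicit Arguments. Unset Strict Implicit. Unset Printing Implicit Defensive.

Record finSemigroup := FinSemigroup {
  carrier :> finType;
  sop : carrier -> carrier -> carrier;
  sopA : associative sop;
  carrier_nonempty : 0 < #|carrier|
}.

Definition is_hom (S T : finSemigroup) (f : S -> T) : Prop :=
  forall x y, f (sop x y) = sop (f x) (f y).

Definition idempotent_el (T : finSemigroup) (e : T) : Prop := sop e e = e.

Definition fsclass := finSemigroup -> Prop.

Section Prod.
Variables S T : finSemigroup.
Definition prod_op (x y : S * T) : S * T := (sop x.1 y.1, sop x.2 y.2).
Lemma prod_opA : associative prod_op.
Proof. by move=> [a b] [c d] [g h]; rewrite /prod_op /= !sopA. Qed.
Lemma prod_nonempty : 0 < #|{: S * T}|.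
Proof. by rewrite card_prod muln_gt0 !carrier_nonempty. Qed.
Definition prod_sg : finSemigroup := FinSemigroup prod_opA prod_nonempty.
End Prod.

Definition unit_op (x y : unit) : unit := tt.
Lemma unit_opA : associative unit_op. Proof. by []. Qed.
Lemma unit_nonempty : 0 < #|{: unit}|. Proof. by rewrite card_unit. Qed.
Definition trivial_sg : finSemigroup := FinSemigroup unit_opA unit_nonempty.

(* Pseudovariety: closed under finite direct products, subsemigroups
   (= injective homomorphisms into a member) and homomorphic images
   (= surjective homomorphisms from a member). *)
Definition pseudovariety (V : fsclass) : Prop :=
  [/\ V trivial_sg,
      (forall S T : finSemigroup, V S -> V T -> V (prod_sg S T)),
      (forall (S T : finSemigroup) (f : S -> T),
          is_hom f -> injective f -> V T -> V S) &
      (forall (S T : finSemigroup) (f : S -> T),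
          is_hom f -> (forall y : T, exists x, f x = y) -> V S -> V T)].

Definition pv_gen (C : fsclass) : fsclass :=
  fun S => forall V : fsclass, pseudovariety V -> (forall T, C T -> V T) -> V S.

Definition pv_join (V W : fsclass) : fsclass := pv_gen (fun S => V S \/ W S).

Definition Sl : fsclass := fun S =>
  (forall x y : S, sop x y = sop y x) /\ (forall x : S, sop x x = x).
Definition LZ : fsclass := fun S => forall x y : S, sop x y = x.
Definition RZ : fsclass := fun S => forall x y : S, sop x y = y.

Definition LNB : fsclass := pv_join Sl LZ.

(* "e phi^-1 belongs to V": some member U of V is isomorphic to the
   subsemigroup e phi^-1 of S, via an injective homomorphism U -> S whose
   image is exactly the preimage of e. *)
Definition preimage_in (V : fsclass) (S T : finSemigroup) (phi : S -> T) (e : T)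
  : Prop :=
  exists U : finSemigroup, V U /\
    exists iota : U -> S, [/\ is_hom iota, injective iota &
      forall x : S, phi x = e <-> exists u, iota u = x].

Definition malcev (V W : fsclass) : fsclass :=
  pv_gen (fun S => exists T : finSemigroup, W T /\
    exists phi : S -> T, is_hom phi /\
      forall e : T, idempotent_el e -> (exists x, phi x = e) ->
        preimage_in V phi e).

(* L_2^bar on 'I_5: 0 = e, 1 = f, 2 = ebar, 3 = fbar, 4 = Ibar. *)
Definition l2bar_op (x y : 'I_5) : 'I_5 :=
  if 2 <= y then y
  else if val x == 4 then inord (y + 2)
  else x.

Lemma l2bar_opA : associative l2bar_op.
Proof.
by do 3!case=> [[|[|[|[|[|?]]]]] ?] //; apply/val_inj;
   rewrite /l2bar_op /= ?inordK.
Qed.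

Lemma l2bar_nonempty : 0 < #|{: 'I_5}|. Proof. by rewrite card_ord. Qed.

Definition L2bar : finSemigroup := FinSemigroup l2bar_opA l2bar_nonempty.

Definition pv_gen1 (X : finSemigroup) : fsclass := pv_gen (fun T => T = X).

(* Main.v *)
Require Import Defs.
From mathcomp Require Import all_boot.
From Stdlib Require Import ClassicalEpsilon.
Set Implicit Arguments. Unset Strict Implicit. Unset Printing Implicit Defensive.


Definition lp (X : finSemigroup) (d : X) (s : seq X) : X :=
  foldl (@sop X) (head d s) (behead s).

Lemma foldl_sopA (X : finSemigroup) (x y : X) s :
  foldl (@sop X) (sop x y) s = sop x (foldl (@sop X) y s).
Proof. by elim: s y => [|z s IH] y //=; rewrite -IH sopA. Qed.

Lemma lp1 (X : finSemigroup) (d x : X) : lp d [:: x] = x.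
Proof. by []. Qed.

Lemma lp_cons (X : finSemigroup) (d x : X) s : s <> [::] ->
  lp d (x :: s) = sop x (lp d s).
Proof. by case: s => [//|y s] _; rewrite /lp /= foldl_sopA. Qed.

Lemma lp_cat (X : finSemigroup) (d : X) s1 s2 : s1 <> [::] -> s2 <> [::] ->
  lp d (s1 ++ s2) = sop (lp d s1) (lp d s2).
Proof.
elim: s1 => [//|x s1 IH] _ H2 /=.
case: s1 IH => [|y s1] IH; first by rewrite lp_cons.
by rewrite lp_cons // IH // [in RHS](lp_cons d x (s := y :: s1)) // sopA.

Qed.

Lemma pv_gen_pv (C : fsclass) : pseudovariety (pv_gen C).
Proof.
split.
- by move=> V [].
- by move=> S T HS HT V HV HC; case: (HV) => _ Hp _ _; apply: Hp; [apply: HS|apply: HT].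
- by move=> S T f hf inj HT V HV HC; case: (HV) => _ _ Hs _; apply: (Hs _ _ f) => //; apply: HT.
- by move=> S T f hf sur HS V HV HC; case: (HV) => _ _ _ Hh; apply: (Hh _ _ f) => //; apply: HS.
Qed.

Lemma pv_gen_sub (C : fsclass) S : C S -> pv_gen C S.
Proof. by move=> H V _ HC; apply: HC. Qed.

Definition LN : fsclass := fun S =>
  (forall x : S, sop x x = x) /\ (forall x y z : S, sop (sop x y) z = sop (sop x z) y).

Lemma LN_pv : pseudovariety LN.
Proof.
split.
- by split=> [[]|[] [] []].
- move=> S T [h1 h2] [k1 k2]; split.
  + by case=> a b; rewrite /= /prod_op /= h1 k1.
  + by case=> a b [c d] [g h]; rewrite /= /prod_op /= h2 k2.
- move=> S T f hf inj [h1 h2]; split.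
  + by move=> x; apply: inj; rewrite hf h1.
  + by move=> x y z; apply: inj; rewrite !hf h2.
- move=> S T f hf sur [h1 h2]; split.
  + by move=> y; case: (sur y) => x <-; rewrite -hf h1.
  + move=> a b c; case: (sur a) => x <-; case: (sur b) => y <-; case: (sur c) => z <-.
    by rewrite -!hf h2.
Qed.

Lemma LNB_LN T : LNB T -> LN T.
Proof.
move=> H; apply: H; first exact: LN_pv.
move=> S [[Hc Hi]|Hl].
  split => //.
  by move=> x y z; rewrite -!sopA (Hc y z).
rewrite /LZ in Hl; split.
- by move=> x; rewrite Hl.
- by move=> x y z; rewrite !Hl.
Qed.

Section LNth.
Variable T : finSemigroup.
Hypothesis HT : LN T.

Lemma LN_absorb (d a : T) l z : z \in a :: l -> sop (lp d (a :: l)) z = lp d (a :: l).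
Proof.
case: HT => h1 h2.
elim/last_ind: l z => [|l b IH] z.
  by rewrite inE => /eqP ->; rewrite lp1 h1.
rewrite -rcons_cons mem_rcons inE => /orP [/eqP ->|zin].
  by rewrite /lp /= foldl_rcons -sopA h1.
by rewrite /lp /= foldl_rcons h2; have := IH z zin; rewrite /lp /= => ->.
Qed.

Lemma LN_lp_eq (d a : T) l m : (forall z, (z \in a :: l) = (z \in a :: m)) ->
  lp d (a :: l) = lp d (a :: m).
Proof.
case: HT => h1 h2 Hc.
have fold_abs : forall l m, {subset m <= a :: l} ->
   foldl (@sop T) (lp d (a :: l)) m = lp d (a :: l).
  move=> l1 m1; elim/last_ind: m1 => [|m1 b IH] Hs //=.
  rewrite foldl_rcons IH; last by move=> z zi; apply: Hs; rewrite mem_rcons inE zi orbT.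
  by rewrite LN_absorb // Hs // mem_rcons mem_head.
have key : forall l m, (forall z, (z \in a :: l) = (z \in a :: m)) ->
   sop (lp d (a :: l)) (lp d (a :: m)) = lp d (a :: l).
  move=> l1 m1 Hc1.
  rewrite {2}/lp /= -foldl_sopA LN_absorb ?mem_head // fold_abs //.
  by move=> z zi; rewrite Hc1 inE zi orbT.
have ap : forall l, sop a (lp d (a :: l)) = lp d (a :: l).
  by move=> l1; rewrite /lp /= -foldl_sopA h1.
have := h2 a (lp d (a :: l)) (lp d (a :: m)).
rewrite !ap key // key //.
Qed.

End LNth.



Definition i5 (n : nat) : 'I_5 := inord n.

Lemma l2_botr (x y : 'I_5) : 2 <= y -> l2bar_op x y = y.
Proof. by rewrite /l2bar_op => ->. Qed.

Lemma l2_botl (x y : 'I_5) : 2 <= x -> 2 <= l2bar_op x y.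
Proof. by case: x => [[|[|[|[|[|?]]]]] ?] //; case: y => [[|[|[|[|[|?]]]]] ?] //= _; rewrite /l2bar_op /= inordK. Qed.

Lemma l2_top (x y : 'I_5) : x < 2 -> y < 2 -> l2bar_op x y = x.
Proof. by case: x => [[|[|[|[|[|?]]]]] ?] //; case: y => [[|[|[|[|[|?]]]]] ?]. Qed.

Lemma l2_bar4_inj (x y : 'I_5) : (x < 2) = (y < 2) ->
  l2bar_op (i5 4) x = l2bar_op (i5 4) y -> x = y.
Proof.
case: x => [[|[|[|[|[|?]]]]] ?] //; case: y => [[|[|[|[|[|?]]]]] ?] //= _;
rewrite /l2bar_op /i5 /= ?inordK //; try (by move=> /(congr1 val) /=; rewrite ?inordK);
by move=> _; apply/val_inj.
Qed.

Definition lp5 (t : seq 'I_5) : 'I_5 := @lp L2bar (i5 0) t.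

Lemma lp5_cons x t : t <> [::] -> lp5 (x :: t) = l2bar_op x (lp5 t).
Proof. by move=> H; rewrite /lp5 lp_cons. Qed.

Lemma lp5_cat t1 t2 : t1 <> [::] -> t2 <> [::] -> lp5 (t1 ++ t2) = l2bar_op (lp5 t1) (lp5 t2).
Proof. by move=> H1 H2; rewrite /lp5 lp_cat. Qed.

Lemma lp5_top_iff t : t <> [::] -> (lp5 t < 2) = all (fun v : 'I_5 => v < 2) t.
Proof.
elim: t => [//|x t IH] _.
case: t IH => [|y t] IH; first by rewrite /= andbT.
rewrite lp5_cons // (_ : all _ _ = (x < 2) && (lp5 (y :: t) < 2)); last by rewrite IH.
case: (ltnP x 2) => hx; case: (ltnP (lp5 (y :: t)) 2) => hl /=.
- by rewrite l2_top.
- by rewrite l2_botr // ltnNge hl.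
- by apply/negbTE; rewrite -leqNgt l2_botl.
- by rewrite l2_botr // ltnNge hl.
Qed.

Lemma lp5_top_head x t : all (fun v : 'I_5 => v < 2) (x :: t) -> lp5 (x :: t) = x.
Proof.
elim: t x => [//|y t IH] x /= /and3P [hx hy ht].
rewrite lp5_cons // IH /= ?hy // l2_top //.
Qed.

Lemma lp5_bot_ge t : t <> [::] -> ~~ all (fun v : 'I_5 => v < 2) t -> 2 <= lp5 t.
Proof. by move=> H; rewrite -lp5_top_iff // -leqNgt. Qed.

Lemma lp5_cat_bot t1 (b : 'I_5) t2 : 2 <= b -> lp5 (t1 ++ b :: t2) = lp5 (b :: t2).
Proof.
move=> hb; case: t1 => [//|x t1].
rewrite lp5_cat // l2_botr // lp5_bot_ge //=.
by rewrite ltnNge hb.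
Qed.

Lemma lp5_03 t : all (fun v : 'I_5 => (val v == 0) || (val v == 3)) t ->
  has (fun v : 'I_5 => val v == 3) t -> val (lp5 t) = 3.
Proof.
elim: t => [//|x t IH] /= /andP [hx ha] hh.
case: t IH ha hh => [|y t] IH ha hh.
  by move: hh; rewrite orbF => /eqP.
rewrite lp5_cons //.
case hy: (has (fun v : 'I_5 => val v == 3) (y :: t)).
  by rewrite l2_botr ?IH.
move: hh; rewrite hy orbF => /eqP x3.
have -> : lp5 (y :: t) = y.
  apply: lp5_top_head; apply/allP => v vin.
  have /orP[/eqP ->//|/eqP v3] := allP ha v vin.
  by move/negbT: hy => /hasP H; exfalso; apply: H; exists v => //; apply/eqP.
have : val y == 0.
  have /orP[//|/eqP y3] := allP ha y (mem_head _ _).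
  by move/negbT: hy => /hasP H; exfalso; apply: H; exists y; rewrite ?mem_head //; apply/eqP.
clear IH ha hy; case: x x3 hx => [[|[|[|[|[|?]]]]] ?] //= _ _.
by case: y => [[|?] ?].
Qed.

Lemma lp5_0 t : t <> [::] -> all (fun v : 'I_5 => val v == 0) t -> val (lp5 t) = 0.
Proof.
case: t => [//|x t] _ ha; rewrite lp5_top_head; first by move: ha => /= /andP [/eqP].
by apply: sub_all ha => v /eqP ->.
Qed.


Lemma split_full (X : eqType) (s : seq X) : s <> [::] ->
  exists P l U, [/\ s = P ++ l :: U, l \notin U & {subset s <= l :: U}].
Proof.
elim: s => [//|a s IH] _.
case: s IH => [|b s] IH.
  by exists [::], a, [::]; split => // z; rewrite inE.
have [//|P [l [U [e nl sub]]]] := IH.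
case ha: (a \in b :: s).
  exists (a :: P), l, U; split => //; first by rewrite e.
  by move=> z; rewrite inE => /orP [/eqP ->|zi]; apply: sub.
by exists [::], a, (b :: s); split => //; rewrite ha.
Qed.

Lemma split_last (X : eqType) (s : seq X) z : z \in s ->
  exists P U, s = P ++ z :: U /\ z \notin U.
Proof.
elim: s => [//|a s IH].
case hz: (z \in s) => zin.
  by have [P [U [e n]]] := IH hz; exists (a :: P), U; rewrite e.
move: zin; rewrite inE hz orbF => /eqP <-.
by exists [::], s; rewrite hz.
Qed.

Section Main.
Variables (S T : finSemigroup) (phi : S -> T).
Hypotheses (HT : LN T) (hphi : is_hom phi)
  (Hfib : forall e : T, idempotent_el e -> (exists x, phi x = e) -> preimage_in RZ phi e).

Lemma phi_lp (d : S) s : s <> [::] -> phi (lp d s) = lp (phi d) (map phi s).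
Proof.
case: s => [//|x s] _; rewrite /lp /=.
by elim: s x => [//|y s IH] x /=; rewrite IH hphi.
Qed.

Lemma fib_eq (a b : S) : phi a = phi b -> sop a b = b.
Proof.
move=> hab.
have idem : idempotent_el (phi b) by rewrite /idempotent_el; case: HT => h1 _; rewrite h1.
have [U [HU [iota [hi inj Hc]]]] := Hfib idem (ex_intro _ b erefl).
have [ua ea] := (proj1 (Hc a) hab).
have [ub eb] := (proj1 (Hc b) erefl).
by rewrite -ea -eb -hi HU.
Qed.

Lemma S_idem (x : S) : sop x x = x.
Proof. exact: fib_eq. Qed.

Lemma star (d a : S) l m : (forall z, (z \in a :: l) = (z \in a :: m)) ->
  sop (lp d (a :: l)) (lp d (a :: m)) = lp d (a :: m).
Proof.
move=> Hc; apply: fib_eq; rewrite !phi_lp //.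
apply: (LN_lp_eq HT) => z.
by apply: (eq_mem_map phi (s1 := a :: l) (s2 := a :: m)).
Qed.

Definition Lrel (a b : S) := sop a b = a /\ sop b a = b.

Lemma lemC (d : S) P Y : Y <> [::] -> {subset P <= Y} -> Lrel (lp d (P ++ Y)) (lp d Y).
Proof.
move=> hY hs; case: P hs => [|p P] hs; first by split; rewrite S_idem.
rewrite lp_cat //; split; first by rewrite -sopA S_idem.
case: Y hY hs => [//|y Y] _ hs.
have := @star d y (Y ++ (p :: P) ++ y :: Y) Y.
rewrite -cat_cons !lp_cat // -!sopA S_idem => -> //.
move=> z; rewrite !mem_cat; case zi: (z \in y :: Y) => //=.
by case zp: (z \in p :: P) => //; rewrite (hs z zp) in zi.
Qed.


Definition ev (sg : {ffun S -> 'I_5}) (s : seq S) : 'I_5 := lp5 (map sg s).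

Lemma i5K n : n < 5 -> nat_of_ord (i5 n) = n.
Proof. by move=> h; rewrite /i5 inordK. Qed.
Lemma i5Kv n : n < 5 -> \val (i5 n) = n.
Proof. by move=> h; rewrite /i5 /= inordK. Qed.

Lemma E1 u v : v <> [::] -> (forall sg, ev sg u = ev sg v) ->
  forall z, z \in u -> z \in v.
Proof.
move=> hv H z zu; apply/contraT => zn.
pose sg := [ffun t => if t == z then i5 2 else i5 0].
have hu : u <> [::] by case: (u) zu.
have := H sg; rewrite /ev => e.
have : 2 <= lp5 (map sg u).
  apply: lp5_bot_ge; first by case: (u) hu.
  rewrite all_map; apply/allPn; exists z => //=.
  by rewrite ffunE eqxx i5K.
rewrite e leqNgt lp5_top_iff; last by case: (v) hv.
rewrite all_map; case/negP; apply/allP => t tv /=.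
rewrite ffunE; case: eqP => [et|_]; last by rewrite i5K.
by rewrite -et tv in zn.
Qed.

Lemma E2 a u b v : (forall sg, ev sg (a :: u) = ev sg (b :: v)) -> a = b.
Proof.
move=> H.
pose sg := [ffun t => if t == a then i5 0 else i5 1].
have top : forall s, all (fun v : 'I_5 => v < 2) (map sg s).
  by move=> s; apply/allP => t /mapP [w _ ->]; rewrite ffunE; case: eqP; rewrite i5K.
have t1 := top (a :: u); have t2 := top (b :: v).
have := H sg; rewrite /ev /= !lp5_top_head //.
rewrite /sg !ffunE eqxx; case: eqP => // _.
by move=> /(congr1 (@nat_of_ord 5)); rewrite !i5K.
Qed.

Lemma E3 P l U P' V : (forall sg, ev sg (P ++ l :: U) = ev sg (P' ++ l :: V)) ->
  l \notin U -> l \notin V -> forall z, z \in U -> z \in V.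
Proof.
move=> H nU nV z zU; apply/contraT => zn.
pose sg := [ffun t => if t == l then i5 2 else if t == z then i5 3 else i5 0].
have sl : sg l = i5 2 by rewrite ffunE eqxx.
have := H sg; rewrite /ev !map_cat /= !lp5_cat_bot ?sl ?i5K //.
have hU : U <> [::] by case: (U) zU.
rewrite lp5_cons; last by case: (U) hU.
have u3 : val (lp5 (map sg U)) = 3.
  apply: lp5_03.
    apply/allP => t /mapP [w wU ->]; rewrite ffunE.
    case: (w =P l) => [ewl|_]; first by move: nU; rewrite -ewl wU.
    by case: ifP => _; rewrite i5Kv.
  apply/hasP; exists (sg z); first exact: map_f.
  rewrite ffunE; case: (z =P l) => [ezl|_]; first by move: nU; rewrite -ezl zU.
  by rewrite eqxx i5Kv.
rewrite l2_botr ?u3 //.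
move: H; case: V nV zn => [|y V] nV zn _.
  by move/(congr1 val); rewrite u3 i5Kv.
rewrite lp5_cons // /l2bar_op.
have v0 : val (lp5 (map sg (y :: V))) = 0.
  apply: lp5_0 => //; apply/allP => t /mapP [w wi ->]; rewrite ffunE.
  case: (w =P l) => [ewl|_]; first by move: nV; rewrite -ewl wi.
  case: (w =P z) => [ewz|_]; first by move: zn; rewrite -ewz wi.
  by rewrite i5Kv.
by rewrite v0 /= i5K //= => /(congr1 val); rewrite u3 i5Kv.
Qed.

Lemma E4 P l U P' V : (forall sg, ev sg (P ++ l :: U) = ev sg (P' ++ l :: V)) ->
  l \notin U -> l \notin V -> U <> [::] -> V <> [::] -> U =i V ->
  forall sg, ev sg U = ev sg V.
Proof.
move=> H nU nV hU hV eUV sg.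
pose sg' := [ffun t => if t == l then i5 4 else sg t].
have e : forall W, l \notin W -> map sg' W = map sg W.
  move=> W nW; apply/eq_in_map => t tW; rewrite ffunE; case: eqP => // etl.
  by rewrite -etl tW in nW.
have sl : sg' l = i5 4 by rewrite ffunE eqxx.
have := H sg'; rewrite /ev !map_cat /= !lp5_cat_bot ?sl ?i5K //.
have mn : forall (f : {ffun S -> 'I_5}) W, W <> [::] -> map f W <> [::] by move=> f [].
rewrite !lp5_cons; try by apply: mn.
rewrite !e // => h; apply: l2_bar4_inj h.
rewrite !lp5_top_iff; try by apply: mn.
by rewrite !all_map; apply: eq_all_r.
Qed.


Lemma KL (d : S) n : forall u v, size u <= n -> u <> [::] -> v <> [::] ->
  (forall sg, ev sg u = ev sg v) -> lp d u = lp d v.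
Proof.
elim: n => [|n IH] u v hs hu hv H; first by case: (u) hs hu.
have c1 := E1 hv H.
have c2 := E1 hu (fun sg => esym (H sg)).
have Hc : u =i v by move=> z; apply/idP/idP; [apply: c1|apply: c2].
have [P [l [U [eu nU sub]]]] := split_full hu.
have lu : l \in u by rewrite eu mem_cat mem_head orbT.
have [P' [V [ev' nV]]] := split_last (c1 _ lu).
have H' := H; rewrite eu ev' in H'.
have cUV := E3 H' nU nV.
have cVU := E3 (fun sg => esym (H' sg)) nV nU.
have eUV : U =i V by move=> z; apply/idP/idP; [apply: cUV|apply: cVU].
have ec : lp d (l :: U) = lp d (l :: V).
  case: U eu nU sub H' cUV cVU eUV => [|y U] eu nU sub H' cUV cVU eUV.
    by case: V ev' nV H' cUV cVU eUV => [//|y V] _ _ _ _ cVU _; have := cVU y (mem_head _ _).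
  case: V ev' nV H' cUV cVU eUV => [|y' V] ev' nV H' cUV cVU eUV.
    by have := cUV y (mem_head _ _).
  rewrite lp_cons // [in RHS]lp_cons //; congr sop.
  apply: IH => //.
    by move: hs; rewrite eu size_cat /= addnS ltnS => h; apply: leq_trans h; apply: leq_addl.
  exact: E4 H' nU nV _ _ eUV.
have subu : {subset P <= l :: U} by move=> z zP; apply: sub; rewrite eu mem_cat zP.
have L1 := @lemC d P (l :: U) (fun h => match h with end) subu.
have subv : {subset P' <= l :: V}.
  move=> z zP; have : z \in l :: U by apply: sub; rewrite Hc ev' mem_cat zP.
  by rewrite !inE => /orP [->|zU] //; rewrite -eUV zU orbT.
have L2 := @lemC d P' (l :: V) (fun h => match h with end) subv.
rewrite -eu ec in L1; rewrite -ev' in L2.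
case: u hs hu H c1 c2 Hc eu sub lu L1 => [//|a u'] _ _ H _ _ Hc _ _ _ L1.
case: v hv H Hc ev' L2 => [//|b v'] _ H Hc _ L2.
have eab := E2 H; subst b.
have R1 := star d Hc.
have R2 := star d (fun z => esym (Hc z)).
case: L1 => x1 _; case: L2 => _ y2.
by rewrite -R1 -{2}x1 -sopA y2 x1.
Qed.

End Main.


Fixpoint pow (n : nat) : finSemigroup :=
  match n with 0 => trivial_sg | n'.+1 => prod_sg L2bar (pow n') end.

Fixpoint mk (n : nat) (g : nat -> 'I_5) {struct n} : pow n :=
  match n as n0 return pow n0 with
  | 0 => tt
  | n'.+1 => (g 0, mk n' (fun i => g i.+1))
  end.

Lemma mk_op n g g' : sop (mk n g) (mk n g') = mk n (fun i => l2bar_op (g i) (g' i)).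
Proof. by elim: n g g' => [|n IH] g g' //=; rewrite /prod_op /= IH. Qed.

Lemma mk_ext n g g' : (forall i, g i = g' i) -> mk n g = mk n g'.
Proof. by elim: n g g' => [|n IH] g g' H //=; rewrite H (IH _ (fun i => g' i.+1)). Qed.

Lemma mk_inj n g g' : mk n g = mk n g' -> forall i, i < n -> g i = g' i.
Proof.
elim: n g g' => [//|n IH] g g' /= [h0 hr] [|i] hi //.
exact: (IH (fun i => g i.+1) (fun i => g' i.+1) hr i hi).
Qed.

Lemma pow_V (V : fsclass) : pseudovariety V -> V L2bar -> forall n, V (pow n).
Proof. by case=> h0 hp _ _ hL; elim=> [|n IH] //=; apply: hp. Qed.

Section Build.
Variables (S T : finSemigroup) (phi : S -> T).
Hypotheses (HT : LN T) (hphi : is_hom phi)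
  (Hfib : forall e : T, idempotent_el e -> (exists x, phi x = e) -> preimage_in RZ phi e).
Variable d : S.

Definition sigs := enum {ffun S -> 'I_5}.
Definition NN := size sigs.
Definition sg0 : {ffun S -> 'I_5} := [ffun _ => i5 0].

Definition enc (s : seq S) : pow NN := mk NN (fun i => ev (nth sg0 sigs i) s).

Lemma enc_cat s1 s2 : s1 <> [::] -> s2 <> [::] -> enc (s1 ++ s2) = sop (enc s1) (enc s2).
Proof.
move=> h1 h2; rewrite /enc mk_op; apply: mk_ext => i.
rewrite /ev map_cat lp5_cat //; by [case: (s1) h1 | case: (s2) h2].
Qed.

Lemma enc_ev u v : enc u = enc v -> forall sg, ev sg u = ev sg v.
Proof.
move=> e sg; have sin : sg \in sigs by rewrite mem_enum.
have := mk_inj e (i := index sg sigs); rewrite nth_index //; apply.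
by rewrite index_mem.
Qed.

Lemma enc_lp u v : u <> [::] -> v <> [::] -> enc u = enc v -> lp d u = lp d v.
Proof. move=> hu hv e; exact: (KL HT hphi Hfib d (leqnn _) hu hv (enc_ev e)). Qed.

Definition isw (p : pow NN) : Prop := exists s, s <> [::] /\ enc s = p.
Definition Pb (p : pow NN) : bool := if excluded_middle_informative (isw p) then true else false.

Lemma PbP p : reflect (isw p) (Pb p).
Proof. by rewrite /Pb; case: excluded_middle_informative => h; constructor. Qed.

Definition wof (p : pow NN) : seq S :=
  match excluded_middle_informative (isw p) with
  | left H => proj1_sig (constructive_indefinite_description _ H)
  | right _ => [:: d]
  end.

Lemma wofP p : isw p -> wof p <> [::] /\ enc (wof p) = p.
Proof.
rewrite /wof; case: excluded_middle_informative => // H _.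
by case: constructive_indefinite_description.
Qed.

Definition Wcar := {p : pow NN | Pb p}.

Lemma Wop_proof (a b : Wcar) : Pb (sop (val a) (val b)).
Proof.
apply/PbP; case/PbP: (valP a) => s1 [h1 e1]; case/PbP: (valP b) => s2 [h2 e2].
exists (s1 ++ s2); split; first by case: (s1) h1.
by rewrite enc_cat // e1 e2.
Qed.

Definition Wop (a b : Wcar) : Wcar := exist _ (sop (val a) (val b)) (Wop_proof a b).

Lemma WopA : associative Wop.
Proof. by move=> a b c; apply: val_inj; rewrite /= sopA. Qed.

Lemma Wsing_proof (y : S) : Pb (enc [:: y]).
Proof. by apply/PbP; exists [:: y]. Qed.

Definition Wsing (y : S) : Wcar := exist _ (enc [:: y]) (Wsing_proof y).

Lemma Wne : 0 < #|{: Wcar}|.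
Proof. by apply/card_gt0P; exists (Wsing d). Qed.

Definition W : finSemigroup := FinSemigroup WopA Wne.

Definition q (a : W) : S := lp d (wof (val a)).

Lemma q_hom : is_hom q.
Proof.
move=> a b; rewrite /q.
case/PbP: (valP a) => s1 [h1 e1]; case/PbP: (valP b) => s2 [h2 e2].
have [ha ea] := wofP (PbP _ (valP a)).
have [hb eb] := wofP (PbP _ (valP b)).
have [hab eab] := wofP (PbP _ (valP (Wop a b))).
rewrite -lp_cat //; apply: enc_lp => //; first by case: (wof _) ha.
by rewrite eab enc_cat // ea eb.
Qed.

Lemma q_sur : forall y : S, exists x : W, q x = y.
Proof.
move=> y; exists (Wsing y); rewrite /q /=.
have [h e] := wofP (PbP _ (Wsing_proof y)).
by rewrite (enc_lp h _ e).
Qed.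

Lemma V_S (V : fsclass) : pseudovariety V -> V L2bar -> V S.
Proof.
move=> HV HL; have HP := pow_V HV HL NN.
case: HV => _ _ Hs Hh.
apply: (Hh W S q q_hom q_sur).
apply: (Hs W (pow NN) val) => //.
exact: val_inj.
Qed.

End Build.


Section Fib.
Variables (S T : finSemigroup) (phi : S -> T) (e : T).
Hypothesis ex : exists x, phi x = e.
Hypothesis Hrz : forall a b, phi a = e -> phi b = e -> sop a b = b.

Definition Fcar := {x : S | phi x == e}.
Definition Fop (a b : Fcar) : Fcar := b.
Lemma FopA : associative Fop. Proof. by []. Qed.
Lemma Fne : 0 < #|{: Fcar}|.
Proof.
case: ex => x hx; apply/card_gt0P.
by exists (exist _ x (introT eqP hx)).
Qed.
Definition Fsg : finSemigroup := FinSemigroup FopA Fne.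

Lemma rz_fiber : preimage_in RZ phi e.
Proof.
exists Fsg; split; first by [].
exists val; split.
- by move=> [a ha] [b hb] /=; rewrite Hrz //; apply/eqP.
- exact: val_inj.
- move=> x; split.
    by move=> hx; exists (exist _ x (introT eqP hx)).
  by case=> [[u hu] <-]; apply/eqP.
Qed.
End Fib.

Definition t3op (x y : 'I_3) : 'I_3 := if (val y == 2) || (val x == 2) then inord 2 else x.
Lemma t3opA : associative t3op.
Proof. by do 3!case=> [[|[|[|?]]] ?] //; apply/val_inj; rewrite /t3op /= ?inordK. Qed.
Lemma t3ne : 0 < #|{: 'I_3}|. Proof. by rewrite card_ord. Qed.
Definition T3 : finSemigroup := FinSemigroup t3opA t3ne.

Definition l2op (x y : 'I_2) : 'I_2 := x.
Lemma l2opA : associative l2op. Proof. by []. Qed.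
Lemma i2ne : 0 < #|{: 'I_2}|. Proof. by rewrite card_ord. Qed.
Definition L2 : finSemigroup := FinSemigroup l2opA i2ne.

Definition slop (x y : 'I_2) : 'I_2 := if val x == 0 then x else y.
Lemma slopA : associative slop.
Proof. by do 3!case=> [[|[|?]] ?]. Qed.
Definition Sl2 : finSemigroup := FinSemigroup slopA i2ne.

Definition rq (p : prod_sg L2 Sl2) : T3 :=
  if val p.2 == 0 then inord 2 else inord (val p.1).

Lemma rq_hom : is_hom rq.
Proof.
by do 2!case=> [[[|[|?]] ?] [[|[|?]] ?]] //; apply/val_inj;
   rewrite /rq /= /t3op /= ?inordK.
Qed.

Lemma rq_sur : forall y : T3, exists x, rq x = y.
Proof.
case=> [[|[|[|?]]] ?] //.
- by exists (ord0, ord_max : 'I_2); apply/val_inj; rewrite /rq /= inordK.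
- by exists (ord_max : 'I_2, ord_max : 'I_2); apply/val_inj; rewrite /rq /= inordK.
- by exists (ord0, ord0); apply/val_inj; rewrite /rq /= inordK.
Qed.

Lemma T3_LNB : LNB T3.
Proof.
move=> V HV HC; case: (HV) => _ hp _ hh.
apply: (hh _ _ rq rq_hom rq_sur); apply: hp; apply: HC.
- by right.
- left; split.
    by do 2!case=> [[|[|?]] ?] //; apply/val_inj.
  by case=> [[|[|?]] ?] //; apply/val_inj.
Qed.

Definition phiL (x : L2bar) : T3 := if val x < 2 then inord (val x) else inord 2.

Lemma phiL_hom : is_hom phiL.
Proof.
by do 2!case=> [[|[|[|[|[|?]]]]] ?] //; apply/val_inj;
   rewrite /phiL /= /l2bar_op /t3op /= ?inordK.
Qed.

Lemma L2bar_rz : forall a b : L2bar, phiL a = phiL b -> sop a b = b.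
Proof.
by do 2!case=> [[|[|[|[|[|?]]]]] ?] //; move=> /(congr1 (@nat_of_ord 3));
  rewrite /phiL /= ?inordK //; move=> _; apply/val_inj; rewrite /= /l2bar_op /= ?inordK.
Qed.


Theorem proposition4p12 :
  forall S : finSemigroup, malcev RZ LNB S <-> pv_gen1 L2bar S.
Proof.
move=> S; split.
- move=> H; apply: H; first exact: pv_gen_pv.
  move=> S' [T [HT [phi [hphi Hfib]]]] V HV HC.
  have HL := HC L2bar erefl.
  case/card_gt0P: (carrier_nonempty S') => d _.
  exact: (V_S (LNB_LN HT) hphi Hfib d HV HL).
- move=> H; apply: H; first exact: pv_gen_pv.
  move=> T' ->; apply: pv_gen_sub.
  exists T3; split; first exact: T3_LNB.
  exists phiL; split; first exact: phiL_hom.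
  move=> e _ ex; apply: (rz_fiber ex) => a b ha hb; apply: L2bar_rz.
  by rewrite ha hb.
Qed.
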